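(* Let $M_1>0$, $M_2>0$. Let $F(z)=\bar{z}G(z)+H(z)$, $z\in\mathbb{D}$, where $G,H$ are analytic in $\mathbb{D}$ with $G(0)=H(0)=0$, $G'(0)=H'(0)=1$, $|G(z)|\leq M_1$ and $|H(z)|\leq M_2$ for all $z\in\mathbb{D}$. Let $\rho_3$ be the unique root in $(0,1)$ of the equation $$1-\Big(M_2-\frac{1}{M_2}\Big)\frac{2r-r^2}{(1-r)^2}-\Big(M_1-\frac{1}{M_1}\Big)\frac{(3-2r)r^2}{(1-r)^2}-2r=0,$$ and $$\sigma_3=\rho_3-\rho_3^2-\Big(M_2-\frac{1}{M_2}\Big)\frac{\rho_3^2}{1-\rho_3}-\Big(M_1-\frac{1}{M_1}\Big)\frac{\rho_3^3}{1-\rho_3}.$$ Then $F$ is univalent in $\mathbb{D}_{\rho_3}$ and $F(\mathbb{D}_{\rho_3})\supseteq\mathbb{D}_{\sigma_3}$.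
   Context: $\mathbb{D}=\{z:|z|<1\}$ and $\mathbb{D}_r=\{z\in\mathbb{C}:|z|<r\}$. *)

(* Defs.v *)
From Stdlib Require Import Reals.
From Coquelicot Require Import Coquelicot.
Open Scope R_scope.

Definition in_disk (r : R) (z : C) : Prop := Cmod z < r.

Definition analytic_in_D (f : C -> C) : Prop :=
  exists a : nat -> C, forall z : C, in_disk 1 z ->
    is_series (fun n : nat => Cmult (a n) (pow_n z n)) (f z).

Definition univalent_on_disk (r : R) (f : C -> C) : Prop :=
  forall z w : C, in_disk r z -> in_disk r w -> f z = f w -> z = w.

Definition eq_rho3 (M1 M2 r : R) : R :=
  1 - (M2 - 1 / M2) * ((2 * r - r ^ 2) / (1 - r) ^ 2)
    - (M1 - 1 / M1) * ((3 - 2 * r) * r ^ 2 / (1 - r) ^ 2)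
    - 2 * r.

Definition sigma3_of (M1 M2 rho : R) : R :=
  rho - rho ^ 2 - (M2 - 1 / M2) * (rho ^ 2 / (1 - rho))
    - (M1 - 1 / M1) * (rho ^ 3 / (1 - rho)).

(* Main.v *)
Require Import Defs.
From Stdlib Require Import Reals Lra Lia.
From Coquelicot Require Import Coquelicot.
Open Scope R_scope.


Fixpoint cs (u : nat -> C) (n : nat) : C :=
  match n with O => RtoC 0 | S n => Cplus (cs u n) (u n) end.
Fixpoint rs (u : nat -> R) (n : nat) : R :=
  match n with O => 0 | S n => rs u n + u n end.

Lemma sum_n_cs (u : nat -> C) n : sum_n u n = cs u (S n).
Proof.
  induction n.
  - rewrite sum_O. simpl. rewrite Cplus_0_l. reflexivity.
  - rewrite sum_Sn, IHn. reflexivity.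
Qed.

Lemma pow_n_Cpow (z : C) n : pow_n z n = Cpow z n.
Proof. induction n; simpl; auto. Qed.

Lemma cs_ext u v n : (forall k, (k < n)%nat -> u k = v k) -> cs u n = cs v n.
Proof. induction n; intros H; simpl; auto. rewrite IHn, H; auto. Qed.

Lemma rs_ext u v n : (forall k, (k < n)%nat -> u k = v k) -> rs u n = rs v n.
Proof. induction n; intros H; simpl; auto. rewrite IHn, H; auto. Qed.

Lemma cs_plus u v n : cs (fun k => Cplus (u k) (v k)) n = Cplus (cs u n) (cs v n).
Proof. induction n; simpl. - ring. - rewrite IHn. ring. Qed.

Lemma cs_minus u v n : cs (fun k => Cminus (u k) (v k)) n = Cminus (cs u n) (cs v n).
Proof. induction n; simpl. - ring. - rewrite IHn. ring. Qed.

Lemma cs_mult_l c u n : cs (fun k => Cmult c (u k)) n = Cmult c (cs u n).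
Proof. induction n; simpl. - ring. - rewrite IHn. ring. Qed.

Lemma cs_mult_r c u n : cs (fun k => Cmult (u k) c) n = Cmult (cs u n) c.
Proof. induction n; simpl. - ring. - rewrite IHn. ring. Qed.

Lemma cs_zero n : cs (fun _ => RtoC 0) n = RtoC 0.
Proof. induction n; simpl; auto. rewrite IHn. ring. Qed.

Lemma cs_const c n : cs (fun _ => c) n = Cmult (RtoC (INR n)) c.
Proof. induction n; cbn [cs]. - simpl. ring. - rewrite IHn. rewrite S_INR, RtoC_plus. ring. Qed.

Lemma rs_plus u v n : rs (fun k => u k + v k) n = rs u n + rs v n.
Proof. induction n; simpl. - ring. - rewrite IHn. ring. Qed.

Lemma rs_mult_l c u n : rs (fun k => c * u k) n = c * rs u n.
Proof. induction n; simpl. - ring. - rewrite IHn. ring. Qed.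

Lemma rs_const c n : rs (fun _ => c) n = INR n * c.
Proof. induction n; cbn [rs]. - simpl. ring. - rewrite IHn, S_INR. ring. Qed.

Lemma rs_le u v n : (forall k, (k < n)%nat -> u k <= v k) -> rs u n <= rs v n.
Proof. induction n; intros H; simpl. lra. assert (u n <= v n) by auto. assert (rs u n <= rs v n) by auto. lra. Qed.

Lemma rs_nonneg u n : (forall k, (k < n)%nat -> 0 <= u k) -> 0 <= rs u n.
Proof. induction n; intros H; simpl. lra. assert (0 <= u n) by auto. assert (0 <= rs u n) by auto. lra. Qed.

Lemma Cmod_cs u n : Cmod (cs u n) <= rs (fun k => Cmod (u k)) n.
Proof.
  induction n; simpl. rewrite Cmod_0. lra.
  eapply Rle_trans. apply Cmod_triangle. lra.
Qed.

Lemma RtoC_rs u n : RtoC (rs u n) = cs (fun k => RtoC (u k)) n.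
Proof. induction n; simpl; auto. rewrite RtoC_plus, IHn. reflexivity. Qed.

Lemma cs_split u P n : cs u (P + n) = Cplus (cs u P) (cs (fun k => u (P + k)%nat) n).
Proof.
  induction n; simpl. - rewrite Nat.add_0_r. ring.
  - rewrite Nat.add_succ_r. simpl. rewrite IHn. ring.
Qed.

Lemma cs_shift2 u n : cs u (S (S n)) = Cplus (Cplus (u O) (u 1%nat)) (cs (fun k => u (S (S k))) n).
Proof.
  change (S (S n)) with (2 + n)%nat. rewrite cs_split. simpl. f_equal. ring.
Qed.

Lemma cs_swap (w : nat -> nat -> C) N L :
  cs (fun j => cs (fun k => w j k) L) N = cs (fun k => cs (fun j => w j k) N) L.
Proof.
  induction N; simpl.
  - rewrite cs_zero. reflexivity.
  - rewrite IHN. rewrite <- cs_plus. reflexivity.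
Qed.

Lemma cs_indic (i P : nat) (c : C) :
  (i < P)%nat -> cs (fun k => if Nat.eqb k i then c else RtoC 0) P = c.
Proof.
  intros H. induction P. lia.
  simpl. destruct (Nat.eq_dec i P).
  - subst. rewrite Nat.eqb_refl.
    rewrite (cs_ext _ (fun _ => RtoC 0)). rewrite cs_zero. ring.
    intros k Hk. destruct (Nat.eqb_spec k P); [lia|auto].
  - rewrite IHP by lia. destruct (Nat.eqb_spec P i); [lia|]. ring.
Qed.

Lemma geom_rs q n : 0 <= q < 1 -> rs (fun k => q ^ k) n <= 1 / (1 - q).
Proof.
  intros Hq. assert (E: rs (fun k => q ^ k) n = (1 - q ^ n) / (1 - q)).
  { induction n; simpl. field. lra. rewrite IHn. field. lra. }
  rewrite E. apply Rmult_le_compat_r. apply Rlt_le, Rinv_0_lt_compat. lra.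
  assert (0 <= q ^ n) by (apply pow_le; lra). lra.
Qed.

Lemma deriv_rs r n : 0 <= r < 1 -> rs (fun k => INR (S k) * r ^ k) n <= 1 / (1 - r) ^ 2.
Proof.
  intros Hr.
  assert (E: rs (fun k => INR (S k) * r ^ k) n = (1 - INR (S n) * r ^ n + INR n * r ^ (S n)) / (1 - r) ^ 2).
  { induction n; cbn [rs]. simpl. field. lra. rewrite IHn.
    rewrite !S_INR. simpl. field. lra. }
  rewrite E. unfold Rdiv. apply Rmult_le_compat_r.
  apply Rlt_le, Rinv_0_lt_compat. apply pow_lt. lra.
  assert (0 <= r ^ n) by (apply pow_le; lra).
  assert (0 <= INR n) by apply pos_INR.
  rewrite S_INR. simpl.
  assert (0 <= r ^ n * (1 + INR n * (1 - r))).
  { apply Rmult_le_pos; auto. assert (0 <= INR n * (1 - r)) by (apply Rmult_le_pos; lra). lra. }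
  nra.
Qed.

Lemma approx_le x y : (forall eps, 0 < eps -> x <= y + eps) -> x <= y.
Proof.
  intros H. destruct (Rle_dec x y); auto. exfalso.
  specialize (H ((x - y)/2)). lra.
Qed.

Lemma series_eps (u : nat -> C) l :
  is_series u l -> forall eps, 0 < eps -> exists N, forall n, (N <= n)%nat -> Cmod (Cminus (cs u n) l) < eps.
Proof.
  intros H eps Heps.
  assert (Hp : 0 < eps / 2) by lra.
  destruct (proj1 (filterlim_locally (F := eventually) (sum_n u) l) H (mkposreal _ Hp)) as [N HN].
  exists (S N). intros n Hn. destruct n as [|n]. lia.
  rewrite <- sum_n_cs.
  specialize (HN n ltac:(lia)).
  apply C_NormedModule_mixin_compat2 in HN. simpl in HN.
  assert (sqrt 2 < 2).
  { rewrite <- (sqrt_square 2) at 2 by lra. apply sqrt_lt_1; lra. }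
  change (minus (sum_n u n) l) with (Cminus (sum_n u n) l) in HN. nra.
Qed.


Definition Ex (x : R) : C := (cos x, sin x).

Lemma Ex_add x y : Ex (x + y) = Cmult (Ex x) (Ex y).
Proof. unfold Ex, Cmult; simpl. rewrite cos_plus, sin_plus. f_equal; ring. Qed.

Lemma Ex_0 : Ex 0 = RtoC 1.
Proof. unfold Ex, RtoC. rewrite cos_0, sin_0. reflexivity. Qed.

Lemma Ex_pow x p : Cpow (Ex x) p = Ex (INR p * x).
Proof.
  induction p. simpl. rewrite Rmult_0_l, Ex_0. reflexivity.
  simpl Cpow. rewrite IHp, <- Ex_add. f_equal. rewrite S_INR. ring.
Qed.

Lemma Ex_conj x : Cconj (Ex x) = Ex (- x).
Proof. unfold Ex, Cconj; simpl. rewrite cos_neg, sin_neg. reflexivity. Qed.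

Lemma Cmod_Ex x : Cmod (Ex x) = 1.
Proof. unfold Cmod, Ex; simpl fst; simpl snd. replace (cos x ^ 2 + sin x ^ 2) with 1. apply sqrt_1. pose proof (sin2_cos2 x). unfold Rsqr in H. simpl. lra. Qed.

Lemma Ex_2pi p : Ex (2 * PI * INR p) = RtoC 1.
Proof.
  unfold Ex, RtoC. pose proof (cos_period 0 p). pose proof (sin_period 0 p).
  rewrite Rplus_0_l, cos_0 in H. rewrite Rplus_0_l, sin_0 in H0.
  replace (2 * PI * INR p) with (2 * INR p * PI) by ring. rewrite H, H0. reflexivity.
Qed.

Lemma geom_cs (w : C) N : Cmult (cs (fun j => Cpow w j) N) (Cminus w (RtoC 1)) = Cminus (Cpow w N) (RtoC 1).
Proof. induction N; cbn [cs Cpow]. ring. rewrite Cmult_plus_distr_r, IHN. ring. Qed.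

Lemma sin_nz x : 0 < Rabs x < PI -> sin x <> 0.
Proof.
  intros H. destruct (Rle_dec 0 x).
  - rewrite Rabs_right in H by lra. pose proof (sin_gt_0 x ltac:(lra) ltac:(lra)). lra.
  - rewrite Rabs_left in H by lra. pose proof (sin_gt_0 (-x) ltac:(lra) ltac:(lra)).
    rewrite sin_neg in H0. lra.
Qed.

Definition om (N j : nat) : C := Ex (INR j * (2 * PI / INR N)).

Lemma Cmod_om N j : Cmod (om N j) = 1.
Proof. apply Cmod_Ex. Qed.

Lemma ortho N p q : (p < N)%nat -> (q < N)%nat ->
  cs (fun j => Cmult (Cpow (om N j) p) (Cconj (Cpow (om N j) q))) N
  = if Nat.eqb p q then RtoC (INR N) else RtoC 0.
Proof.
  intros Hp Hq.
  assert (HN : 0 < INR N) by (apply lt_0_INR; lia).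
  set (th := 2 * PI / INR N).
  set (d := INR p - INR q).
  assert (E : forall j, Cmult (Cpow (om N j) p) (Cconj (Cpow (om N j) q)) = Cpow (Ex (d * th)) j).
  { intros j. unfold om. rewrite !Ex_pow, Ex_conj, <- Ex_add. f_equal. fold th. unfold d. ring. }
  rewrite (cs_ext _ (fun j => Cpow (Ex (d * th)) j)) by (intros; apply E).
  destruct (Nat.eqb_spec p q).
  - subst. unfold d. rewrite Rminus_diag, Rmult_0_l, Ex_0.
    rewrite (cs_ext _ (fun _ => RtoC 1)) by (intros; apply Cpow_1_l). rewrite cs_const. ring.
  - set (w := Ex (d * th)).
    assert (HwN : Cpow w N = RtoC 1).
    { unfold w. rewrite Ex_pow.
      replace (INR N * (d * th)) with (2 * PI * INR p + - (2 * PI * INR q)).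
      rewrite Ex_add, <- Ex_conj, !Ex_2pi. unfold Cconj, RtoC; simpl. 
      rewrite Ropp_0. unfold Cmult; simpl. f_equal; ring.
      unfold th, d. field. lra. }
    assert (Hw1 : Cminus w (RtoC 1) <> RtoC 0).
    { intros Hc. apply Ceq_minus in Hc. unfold w, Ex, RtoC in Hc. injection Hc as Hc1 Hc2.
      replace (d * th) with (2 * (d * th / 2)) in Hc1 by field.
      rewrite cos_2a_sin in Hc1.
      assert (sin (d * th / 2) <> 0).
      { apply sin_nz. unfold th, d.
        assert (Hd : 1 <= Rabs (INR p - INR q) <= INR N - 1).
        { destruct (Nat.lt_total p q) as [H|[H|H]]; [|lia|].
          - assert (INR (S p) <= INR q) by (apply le_INR; lia).
            assert (INR (S q) <= INR N) by (apply le_INR; lia). rewrite !S_INR in *.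
            rewrite Rabs_left by lra. pose proof (pos_INR p). split; lra.
          - assert (INR (S q) <= INR p) by (apply le_INR; lia).
            assert (INR (S p) <= INR N) by (apply le_INR; lia). rewrite !S_INR in *.
            rewrite Rabs_right by lra. pose proof (pos_INR q). split; lra. }
        replace ((INR p - INR q) * (2 * PI / INR N) / 2) with ((INR p - INR q) * (PI / INR N)) by (field; lra).
        rewrite Rabs_mult. rewrite (Rabs_right (PI / INR N)).
        2:{ apply Rle_ge, Rlt_le. apply Rdiv_lt_0_compat; auto. apply PI_RGT_0. }
        pose proof PI_RGT_0.
        assert (0 < PI / INR N) by (apply Rdiv_lt_0_compat; lra).
        split. nra.
        apply Rle_lt_trans with ((INR N - 1) * (PI / INR N)). apply Rmult_le_compat_r; lra.
        replace ((INR N - 1) * (PI / INR N)) with (PI - PI / INR N) by (field; lra). lra. }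
      apply H. nra. }
    pose proof (geom_cs w N) as G. rewrite HwN in G. 
    replace (Cminus (RtoC 1) (RtoC 1)) with (RtoC 0) in G by ring.
    destruct (Ceq_dec (cs (fun j => Cpow w j) N) (RtoC 0)) as [Z|Z]; auto.
    exfalso. apply (Cmult_neq_0 _ _ Z Hw1). auto.
Qed.


Lemma rs_term u n k : (forall i, (i < n)%nat -> 0 <= u i) -> (k < n)%nat -> u k <= rs u n.
Proof.
  induction n; intros H Hk. lia. simpl.
  destruct (Nat.eq_dec k n). subst. assert (0 <= rs u n) by (apply rs_nonneg; auto). lra.
  assert (u k <= rs u n) by (apply IHn; auto; lia). assert (0 <= u n) by auto. lra.
Qed.

Lemma Cmod_term (c : C) (x : R) k : 0 <= x -> Cmod (Cmult c (pow_n (RtoC x) k)) = Cmod c * x ^ k.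
Proof. intros. rewrite Cmod_mult, pow_n_Cpow, <- RtoC_pow, Cmod_R, Rabs_right; auto. apply Rle_ge, pow_le; auto. Qed.

Lemma Cmod_small_eq x y : (forall eps, 0 < eps -> Cmod (Cminus x y) < eps) -> x = y.
Proof.
  intros H. apply Ceq_minus. apply Cmod_eq_0. apply Rle_antisym.
  apply approx_le. intros e He. specialize (H e He). lra. apply Cmod_ge_0.
Qed.

Section Coef.
Variable f : C -> C.
Variable a : nat -> C.
Hypothesis Hs : forall z, Cmod z < 1 -> is_series (fun k => Cmult (a k) (pow_n z k)) (f z).

Lemma coef_bounded r0 : 0 < r0 < 1 -> exists B, 0 <= B /\ forall k, Cmod (a k) * r0 ^ k <= B.
Proof.
  intros Hr.
  assert (Hz : Cmod (RtoC r0) < 1) by (rewrite Cmod_R, Rabs_right; lra).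
  destruct (series_eps _ _ (Hs _ Hz) 1 ltac:(lra)) as [N HN].
  set (u := fun k => Cmod (a k) * r0 ^ k).
  assert (Hu : forall k, 0 <= u k).
  { intros k. unfold u. apply Rmult_le_pos. apply Cmod_ge_0. apply pow_le; lra. }
  exists (2 + rs u N). split.
  - assert (0 <= rs u N) by (apply rs_nonneg; auto). lra.
  - intros k. fold (u k). destruct (Nat.lt_ge_cases k N).
    + assert (u k <= rs u N) by (apply rs_term; auto). assert (0 <= rs u N) by (apply rs_nonneg; auto). lra.
    + assert (0 <= rs u N) by (apply rs_nonneg; auto).
      pose proof (HN k H) as H1. pose proof (HN (S k) ltac:(lia)) as H2.
      simpl cs in H2.
      assert (E : Cmult (a k) (pow_n (RtoC r0) k) =
        Cminus (Cminus (Cplus (cs (fun k0 => Cmult (a k0) (pow_n (RtoC r0) k0)) k) (Cmult (a k) (pow_n (RtoC r0) k))) (f (RtoC r0)))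
               (Cminus (cs (fun k0 => Cmult (a k0) (pow_n (RtoC r0) k0)) k) (f (RtoC r0)))) by ring.
      assert (HH: Cmod (Cmult (a k) (pow_n (RtoC r0) k)) < 2).
      { rewrite E. eapply Rle_lt_trans. unfold Cminus at 1. apply Cmod_triangle. rewrite Cmod_opp. lra. }
      rewrite Cmod_term in HH by lra. assert (u k < 2) by (unfold u; exact HH). lra.
Qed.

Lemma ps_bound z X Bd : Cmod z < 1 ->
  (forall L, Cmod (Cminus (cs (fun k => Cmult (a k) (pow_n z k)) (S (S L))) X) <= Bd) ->
  Cmod (Cminus (f z) X) <= Bd.
Proof.
  intros Hz H. apply approx_le. intros e He.
  destruct (series_eps _ _ (Hs _ Hz) e He) as [N HN].
  specialize (HN (S (S N)) ltac:(lia)). specialize (H N).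
  set (c := cs (fun k => Cmult (a k) (pow_n z k)) (S (S N))) in *.
  replace (Cminus (f z) X) with (Cplus (Copp (Cminus c (f z))) (Cminus c X)) by ring.
  eapply Rle_trans. apply Cmod_triangle. rewrite Cmod_opp. lra.
Qed.

Lemma ps_bound2 z1 z2 X Bd : Cmod z1 < 1 -> Cmod z2 < 1 ->
  (forall L, Cmod (Cminus (Cminus (cs (fun k => Cmult (a k) (pow_n z1 k)) (S (S L)))
                                  (cs (fun k => Cmult (a k) (pow_n z2 k)) (S (S L)))) X) <= Bd) ->
  Cmod (Cminus (Cminus (f z1) (f z2)) X) <= Bd.
Proof.
  intros Hz1 Hz2 H. apply approx_le. intros e He.
  destruct (series_eps _ _ (Hs _ Hz1) (e/2) ltac:(lra)) as [N1 HN1].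
  destruct (series_eps _ _ (Hs _ Hz2) (e/2) ltac:(lra)) as [N2 HN2].
  specialize (HN1 (S (S (N1 + N2))) ltac:(lia)). specialize (HN2 (S (S (N1 + N2))) ltac:(lia)).
  specialize (H (N1 + N2)%nat).
  set (c1 := cs (fun k => Cmult (a k) (pow_n z1 k)) (S (S (N1 + N2)))) in *.
  set (c2 := cs (fun k => Cmult (a k) (pow_n z2 k)) (S (S (N1 + N2)))) in *.
  replace (Cminus (Cminus (f z1) (f z2)) X) with
    (Cplus (Cplus (Copp (Cminus c1 (f z1))) (Cminus c2 (f z2))) (Cminus (Cminus c1 c2) X)) by ring.
  eapply Rle_trans. apply Cmod_triangle. eapply Rle_trans. apply Rplus_le_compat_r. apply Cmod_triangle.
  rewrite Cmod_opp. lra.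
Qed.

Lemma coef0 : a O = f (RtoC 0).
Proof.
  assert (Hz : Cmod (RtoC 0) < 1) by (rewrite Cmod_0; lra).
  symmetry. apply Cmod_small_eq. intros e He.
  apply Rle_lt_trans with 0; auto.
  assert (Cmod (Cminus (f (RtoC 0)) (a O)) <= 0); auto.
  apply ps_bound; auto. intros L. rewrite cs_shift2.
  rewrite (cs_ext (fun k => Cmult (a (S (S k))) (pow_n (RtoC 0) (S (S k)))) (fun _ => RtoC 0)).
  rewrite cs_zero. simpl pow_n. 
  replace (Cminus (Cplus (Cplus (Cmult (a 0%nat) one) (Cmult (a 1%nat) (mult (RtoC 0) one))) (RtoC 0)) (a 0%nat)) with (RtoC 0).
  rewrite Cmod_0; lra.
  change (mult (RtoC 0) one) with (Cmult (RtoC 0) (RtoC 1)). change (@one C_Ring) with (RtoC 1). ring.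
  intros k _. simpl pow_n. change (mult (RtoC 0) (mult (RtoC 0) (pow_n (RtoC 0) k))) with (Cmult (RtoC 0) (Cmult (RtoC 0) (pow_n (RtoC 0) k))). ring.
Qed.

End Coef.


Lemma deriv_unpack (f : C -> C) :
  is_derive (K := C_AbsRing) (V := C_NormedModule) f (RtoC 0) (RtoC 1) ->
  forall eps, 0 < eps -> exists del, 0 < del /\ forall t : R, Rabs t < del ->
    Cmod (Cminus (Cminus (f (RtoC t)) (f (RtoC 0))) (RtoC t)) <= eps * Rabs t.
Proof.
  intros [_ H] eps He.
  specialize (H (RtoC 0) (fun P HP => HP) (mkposreal eps He)).
  destruct H as [del Hdel]. exists del. split. apply cond_pos.
  intros t Ht.
  assert (Hb : @ball (AbsRing_UniformSpace C_AbsRing) (RtoC 0) del (RtoC t)).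
  { change (Cmod (Cminus (RtoC t) (RtoC 0)) < del).
    replace (Cminus (RtoC t) (RtoC 0)) with (RtoC t) by ring. rewrite Cmod_R. auto. }
  specialize (Hdel _ Hb).
  change (Cmod (Cminus (Cminus (f (RtoC t)) (f (RtoC 0))) (Cmult (Cminus (RtoC t) (RtoC 0)) (RtoC 1))) <= eps * Cmod (Cminus (RtoC t) (RtoC 0))) in Hdel.
  replace (Cminus (RtoC t) (RtoC 0)) with (RtoC t) in Hdel by ring.
  rewrite Cmult_1_r in Hdel. rewrite Cmod_R in Hdel. exact Hdel.
Qed.

Lemma coef1 (f : C -> C) (a : nat -> C) :
  (forall z, Cmod z < 1 -> is_series (fun k => Cmult (a k) (pow_n z k)) (f z)) ->
  a O = RtoC 0 -> f (RtoC 0) = RtoC 0 ->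
  is_derive (K := C_AbsRing) (V := C_NormedModule) f (RtoC 0) (RtoC 1) ->
  a 1%nat = RtoC 1.
Proof.
  intros Hs Ha0 Hf0 Hd.
  destruct (coef_bounded f a Hs (1/2) ltac:(lra)) as [B [HB0 HB]].
  assert (Q : forall t, 0 < t <= 1/4 -> Cmod (Cminus (f (RtoC t)) (Cmult (a 1%nat) (RtoC t))) <= 8 * B * t ^ 2).
  { intros t Ht. apply ps_bound with (a := a); auto. rewrite Cmod_R, Rabs_right; lra.
    intros L. rewrite cs_shift2. rewrite Ha0. simpl pow_n.
    change (mult (RtoC t) one) with (Cmult (RtoC t) (RtoC 1)).
    change (@one C_Ring) with (RtoC 1).
    set (SS := cs _ L).
    replace (Cminus (Cplus (Cplus (Cmult (RtoC 0) (RtoC 1)) (Cmult (a 1%nat) (Cmult (RtoC t) (RtoC 1)))) SS) (Cmult (a 1%nat) (RtoC t))) with SS by ring.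
    unfold SS. eapply Rle_trans. apply Cmod_cs.
    apply Rle_trans with (rs (fun k => (4 * B * t ^ 2) * (2 * t) ^ k) L).
    - apply rs_le. intros k _. 
      change (mult (RtoC t) (mult (RtoC t) (pow_n (RtoC t) k))) with (pow_n (RtoC t) (S (S k))).
      rewrite Cmod_term by lra. specialize (HB (S (S k))).
      replace (t ^ S (S k)) with ((1/2) ^ S (S k) * (2 * t) ^ S (S k)).
      2:{ rewrite <- Rpow_mult_distr. f_equal. field. }
      replace ((2 * t) ^ S (S k)) with (4 * t ^ 2 * (2 * t) ^ k) by (simpl; ring).
      assert (0 <= 4 * t ^ 2 * (2 * t) ^ k). { apply Rmult_le_pos. nra. apply pow_le; lra. }
      rewrite <- Rmult_assoc. replace (4 * B * t ^ 2 * (2 * t) ^ k) with (B * (4 * t ^ 2 * (2 * t) ^ k)) by ring.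
      apply Rmult_le_compat_r; auto.
    - rewrite rs_mult_l. 
      assert (H1 : rs (fun k => (2 * t) ^ k) L <= 1 / (1 - 2 * t)) by (apply geom_rs; lra).
      assert (H2 : 1 / (1 - 2 * t) <= 2). { unfold Rdiv; rewrite Rmult_1_l. replace 2 with (/ (1/2)) at 2 by field. apply Rinv_le_contravar; lra. }
      assert (0 <= 4 * B * t ^ 2) by (apply Rmult_le_pos; nra).
      apply Rle_trans with (4 * B * t ^ 2 * 2). apply Rmult_le_compat_l. lra. eapply Rle_trans; [exact H1|exact H2]. right; ring. }
  apply Cmod_small_eq. intros e He.
  destruct (deriv_unpack f Hd (e/4) ltac:(lra)) as [del [Hdel Hd1]].
  set (t := Rmin (del / 2) (Rmin (1/4) (e / (32 * B + 4)))).
  assert (Ht0 : 0 < t).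
  { unfold t. apply Rmin_pos. lra. apply Rmin_pos. lra. apply Rdiv_lt_0_compat; lra. }
  assert (Ht1 : t <= del / 2) by apply Rmin_l.
  assert (Ht2 : t <= 1/4) by (eapply Rle_trans; [apply Rmin_r|apply Rmin_l]).
  assert (Ht3 : t <= e / (32 * B + 4)) by (eapply Rle_trans; [apply Rmin_r|apply Rmin_r]).
  specialize (Q t ltac:(lra)). specialize (Hd1 t ltac:(rewrite Rabs_right; lra)).
  rewrite Hf0, Rabs_right in Hd1 by lra.
  assert (E : Cmult (Cminus (a 1%nat) (RtoC 1)) (RtoC t) =
    Cminus (Cminus (Cminus (f (RtoC t)) (RtoC 0)) (RtoC t)) (Cminus (f (RtoC t)) (Cmult (a 1%nat) (RtoC t)))) by ring.
  assert (Hm : Cmod (Cminus (a 1%nat) (RtoC 1)) * t <= e / 4 * t + 8 * B * t ^ 2).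
  { rewrite <- (Rabs_right t) at 1 by lra. rewrite <- Cmod_R, <- Cmod_mult, E.
    eapply Rle_trans. unfold Cminus at 1. apply Cmod_triangle. rewrite Cmod_opp. lra. }
  assert (Cmod (Cminus (a 1%nat) (RtoC 1)) <= e / 4 + 8 * B * t).
  { apply Rmult_le_reg_r with t; auto. replace ((e / 4 + 8 * B * t) * t) with (e / 4 * t + 8 * B * t ^ 2) by ring. auto. }
  assert (8 * B * t <= e / 4).
  { apply Rle_trans with (8 * B * (e / (32 * B + 4))). apply Rmult_le_compat_l; lra.
    apply Rmult_le_reg_r with (32 * B + 4). lra. field_simplify; nra. }
  lra.
Qed.


Lemma Cpow_add x p q : Cpow x (p + q) = Cmult (Cpow x p) (Cpow x q).
Proof. induction p; simpl. ring. rewrite IHp. ring. Qed.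

Lemma Cpow_mult_distr x y k : Cpow (Cmult x y) k = Cmult (Cpow x k) (Cpow y k).
Proof. induction k; simpl. ring. rewrite IHk. ring. Qed.

Lemma RtoC_inj' x y : RtoC x = RtoC y -> x = y.
Proof. intros H. injection H. auto. Qed.

Lemma Cconj_R x : Cconj (RtoC x) = RtoC x.
Proof. unfold Cconj, RtoC; simpl. f_equal. ring. Qed.

Lemma Cmod_sq_conj c : Cmod c = 1 -> Cmult c (Cconj c) = RtoC 1.
Proof. intros H. rewrite <- Cmod2_conj, H. f_equal. ring. Qed.

Lemma uniform_L (P : nat -> nat -> Prop) N :
  (forall j, (j < N)%nat -> exists Lj, forall L, (Lj <= L)%nat -> P j L) ->
  exists L0, forall L, (L0 <= L)%nat -> forall j, (j < N)%nat -> P j L.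
Proof.
  induction N; intros H.
  - exists O. intros. lia.
  - destruct IHN as [L1 H1]. { intros j Hj. apply H. lia. }
    destruct (H N ltac:(lia)) as [L2 H2].
    exists (L1 + L2)%nat. intros L HL j Hj.
    destruct (Nat.eq_dec j N). subst. apply H2. lia. apply H1. lia. lia.
Qed.

Section Key.
Variable f : C -> C.
Variable a : nat -> C.
Hypothesis Hs : forall z, Cmod z < 1 -> is_series (fun k => Cmult (a k) (pow_n z k)) (f z).
Hypothesis Ha0 : a O = RtoC 0.
Hypothesis Ha1 : a 1%nat = RtoC 1.
Variable M : R.
Hypothesis HM : 0 < M.
Hypothesis Hf : forall z, Cmod z < 1 -> Cmod (f z) <= M.

Variable n : nat.
Hypothesis Hn : (2 <= n)%nat.
Variable v : C.
Hypothesis Hv1 : Cmod v = 1.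
Hypothesis Hva : Cmult v (a n) = RtoC (Cmod (a n)).
Variable N : nat.
Hypothesis HN : (3 * n < N)%nat.

Let s := / M.
Let m := (n - 1)%nat.
Let om' j := om N j.
Let K j := Cmult (Cconj (Cpow (om' j) n)) (Cpow (Cplus v (Cmult (RtoC s) (Cpow (om' j) m))) 2).
Let e k := cs (fun j => Cmult (Cpow (om' j) k) (K j)) N.

Lemma s_pos : 0 < s.
Proof. unfold s. apply Rinv_0_lt_compat. auto. Qed.

Lemma Cmod_om_pow j k : Cmod (Cpow (om' j) k) = 1.
Proof. rewrite Cmod_pow. unfold om'. rewrite Cmod_om. apply pow1. Qed.

Lemma K_mod j : Cmod (K j) = Cmod (Cplus v (Cmult (RtoC s) (Cpow (om' j) m))) ^ 2.
Proof. unfold K. rewrite Cmod_mult, Cmod_conj, Cmod_om_pow, Cmod_pow. ring. Qed.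

Lemma K_le j : Cmod (K j) <= (1 + s) ^ 2.
Proof.
  rewrite K_mod. pose proof s_pos.
  assert (Cmod (Cplus v (Cmult (RtoC s) (Cpow (om' j) m))) <= 1 + s).
  { eapply Rle_trans. apply Cmod_triangle. rewrite Cmod_mult, Cmod_om_pow, Hv1, Cmod_R, Rabs_right; lra. }
  pose proof (Cmod_ge_0 (Cplus v (Cmult (RtoC s) (Cpow (om' j) m)))).
  apply pow_incr. lra.
Qed.

Lemma e_le k : Cmod (e k) <= INR N * (1 + s) ^ 2.
Proof.
  unfold e. eapply Rle_trans. apply Cmod_cs. rewrite <- rs_const. apply rs_le.
  intros j _. rewrite Cmod_mult, Cmod_om_pow, Rmult_1_l. apply K_le.
Qed.

Lemma sum_Kmod : rs (fun j => Cmod (Cplus v (Cmult (RtoC s) (Cpow (om' j) m))) ^ 2) N = INR N * (1 + s ^ 2).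
Proof.
  apply RtoC_inj'. rewrite RtoC_rs.
  assert (Hm0 : (m < N)%nat) by (unfold m; lia).
  assert (Hm1 : m <> 0%nat) by (unfold m; lia).
  rewrite (cs_ext _ (fun j => Cplus (Cplus (Cplus (RtoC 1)
                (Cmult (Cmult (RtoC s) v) (Cmult (Cpow (om' j) 0) (Cconj (Cpow (om' j) m)))))
                (Cmult (Cmult (RtoC s) (Cconj v)) (Cmult (Cpow (om' j) m) (Cconj (Cpow (om' j) 0)))))
                (Cmult (RtoC (s ^ 2)) (RtoC 1)))).
  - rewrite !cs_plus, !cs_mult_l. unfold om'. rewrite !ortho by lia.
    rewrite (proj2 (Nat.eqb_neq 0 m)) by lia. rewrite (proj2 (Nat.eqb_neq m 0)) by lia.
    rewrite !cs_const. rewrite RtoC_mult, RtoC_plus, RtoC_pow. ring.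
  - intros j _. rewrite Cmod2_conj.
    rewrite Cplus_conj, Cmult_conj, Cconj_R.
    pose proof (Cmod_sq_conj v Hv1) as E1.
    pose proof (Cmod_sq_conj (Cpow (om' j) m) (Cmod_om_pow j m)) as E2.
    change (Cpow (om' j) 0) with (RtoC 1). rewrite Cconj_R. rewrite RtoC_pow.
    transitivity (Cplus (Cplus (Cplus (Cmult v (Cconj v)) (Cmult (Cmult (RtoC s) v) (Cconj (Cpow (om' j) m))))
       (Cmult (Cmult (RtoC s) (Cconj v)) (Cpow (om' j) m)))
       (Cmult (Cmult (RtoC s) (RtoC s)) (Cmult (Cpow (om' j) m) (Cconj (Cpow (om' j) m))))).
    ring. rewrite E1, E2. simpl. ring.
Qed.


Let P := (N - 2 * n)%nat.

Lemma e_small k : (k < P)%nat ->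
  e k = Cplus (Cplus (Cmult (Cmult v v) (if Nat.eqb k n then RtoC (INR N) else RtoC 0))
                     (Cmult (Cmult (RtoC (2 * s)) v) (if Nat.eqb (k + m) n then RtoC (INR N) else RtoC 0)))
              (Cmult (RtoC (s ^ 2)) (if Nat.eqb (k + (m + m)) n then RtoC (INR N) else RtoC 0)).
Proof.
  intros Hk. unfold P in Hk. unfold e.
  rewrite (cs_ext _ (fun j => Cplus (Cplus (Cmult (Cmult v v) (Cmult (Cpow (om' j) k) (Cconj (Cpow (om' j) n))))
                     (Cmult (Cmult (RtoC (2 * s)) v) (Cmult (Cpow (om' j) (k + m)) (Cconj (Cpow (om' j) n)))))
              (Cmult (RtoC (s ^ 2)) (Cmult (Cpow (om' j) (k + (m + m))) (Cconj (Cpow (om' j) n)))))).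
  - rewrite !cs_plus, !cs_mult_l. unfold om'. rewrite !ortho; auto; unfold m; lia.
  - intros j _. unfold K. rewrite !Cpow_add. rewrite RtoC_mult, RtoC_pow. simpl Cpow. ring.
Qed.

Lemma head_sum r : cs (fun k => Cmult (Cmult (a k) (RtoC (r ^ k))) (e k)) P
  = Cmult (Cmult (RtoC (INR N)) v) (RtoC (Cmod (a n) * r ^ n + 2 * s * r)).
Proof.
  rewrite (cs_ext _ (fun k => Cplus (if Nat.eqb k n then Cmult (RtoC (INR N)) (Cmult (Cmult v v) (Cmult (a n) (RtoC (r ^ n)))) else RtoC 0)
                                    (if Nat.eqb k 1 then Cmult (RtoC (INR N)) (Cmult (RtoC (2 * s)) (Cmult v (RtoC r))) else RtoC 0))).
  - rewrite cs_plus, !cs_indic by (unfold P; lia).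
    rewrite RtoC_plus, !RtoC_mult. rewrite <- Hva. ring.
  - intros k Hk. rewrite e_small by auto.
    destruct (Nat.eqb_spec (k + (m + m)) n) as [E3|E3].
    { assert (k = 0%nat) by (unfold m in E3; lia). subst k. rewrite Ha0.
      destruct (Nat.eqb_spec 0 n); [lia|]. destruct (Nat.eqb_spec 0 1); [lia|].
      ring. }
    destruct (Nat.eqb_spec (k + m) n) as [E2|E2].
    { assert (k = 1%nat) by (unfold m in E2; lia). subst k. rewrite Ha1.
      destruct (Nat.eqb_spec 1 n); [lia|]. simpl Nat.eqb. rewrite RtoC_pow. simpl Cpow. ring. }
    destruct (Nat.eqb_spec k 1) as [E1|E1]. { subst k. unfold m in E2. lia. }
    destruct (Nat.eqb_spec k n) as [E0|E0].
    + subst k. ring.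
    + ring.
Qed.

Lemma sigma_id r L :
  cs (fun j => Cmult (cs (fun k => Cmult (a k) (pow_n (Cmult (RtoC r) (om' j)) k)) L) (K j)) N
  = cs (fun k => Cmult (Cmult (a k) (RtoC (r ^ k))) (e k)) L.
Proof.
  rewrite (cs_ext _ (fun j => cs (fun k => Cmult (Cmult (a k) (pow_n (Cmult (RtoC r) (om' j)) k)) (K j)) L))
    by (intros; rewrite cs_mult_r; auto).
  rewrite cs_swap. apply cs_ext. intros k _. unfold e. rewrite <- cs_mult_l. apply cs_ext. intros j _.
  rewrite pow_n_Cpow, Cpow_mult_distr, RtoC_pow. ring.
Qed.

Lemma tail_bound r B q L : 0 <= r -> 0 <= B -> 0 <= q < 1 -> (forall k, Cmod (a k) * r ^ k <= B * q ^ k) ->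
  Cmod (cs (fun k => Cmult (Cmult (a (P + k)%nat) (RtoC (r ^ (P + k)))) (e (P + k)%nat)) L)
  <= INR N * (1 + s) ^ 2 * (B * q ^ P / (1 - q)).
Proof.
  intros Hr HB Hq Hab.
  eapply Rle_trans. apply Cmod_cs.
  apply Rle_trans with (rs (fun k => (INR N * (1 + s) ^ 2 * (B * q ^ P)) * q ^ k) L).
  - apply rs_le. intros k _. rewrite !Cmod_mult, Cmod_R, Rabs_right by (apply Rle_ge, pow_le; lra).
    specialize (Hab (P + k)%nat).
    pose proof (e_le (P + k)) as He. pose proof (Cmod_ge_0 (a (P + k)%nat)).
    assert (0 <= Cmod (a (P + k)%nat) * r ^ (P + k)) by (apply Rmult_le_pos; auto; apply pow_le; auto).
    assert (0 <= INR N * (1 + s) ^ 2) by (apply Rmult_le_pos; [apply pos_INR| apply pow_le; pose proof s_pos; lra]).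
    apply Rle_trans with ((B * q ^ (P + k)) * (INR N * (1 + s) ^ 2)).
    apply Rmult_le_compat; [auto | apply Cmod_ge_0 | exact Hab | exact He].
    rewrite pow_add; right; ring.
  - rewrite rs_mult_l.
    assert (0 <= INR N * (1 + s) ^ 2 * (B * q ^ P)).
    { apply Rmult_le_pos. apply Rmult_le_pos; [apply pos_INR| apply pow_le; pose proof s_pos; lra].
      apply Rmult_le_pos; auto. apply pow_le; lra. }
    apply Rle_trans with (INR N * (1 + s) ^ 2 * (B * q ^ P) * (1 / (1 - q))).
    apply Rmult_le_compat_l; auto. apply geom_rs; auto. right; field. lra.
Qed.

Lemma Cmod_z r j : 0 <= r -> Cmod (Cmult (RtoC r) (om' j)) = r.
Proof. intros. rewrite Cmod_mult, Cmod_R, Rabs_right by lra. unfold om'. rewrite Cmod_om. ring. Qed.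

Lemma S_bound r : 0 <= r < 1 ->
  Cmod (cs (fun j => Cmult (f (Cmult (RtoC r) (om' j))) (K j)) N) <= M * (INR N * (1 + s ^ 2)).
Proof.
  intros Hr. eapply Rle_trans. apply Cmod_cs. rewrite <- sum_Kmod, <- rs_mult_l.
  apply rs_le. intros j _. rewrite Cmod_mult, K_mod.
  apply Rmult_le_compat_r. apply pow_le, Cmod_ge_0.
  apply Hf. rewrite Cmod_z; lra.
Qed.

Lemma key r B q : 0 <= r < 1 -> 0 <= B -> 0 <= q < 1 -> (forall k, Cmod (a k) * r ^ k <= B * q ^ k) ->
  Cmod (a n) * r ^ n + 2 * s * r <= M * (1 + s ^ 2) + (1 + s) ^ 2 * (B * q ^ P / (1 - q)).
Proof.
  intros Hr HB Hq Hab.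
  assert (HNpos : 0 < INR N) by (apply lt_0_INR; lia).
  pose proof s_pos as Hs0.
  assert (Hc : 0 < (1 + s) ^ 2) by (apply pow_lt; lra).
  apply approx_le. intros eps Heps.
  set (eps' := eps / (1 + s) ^ 2).
  assert (He' : 0 < eps') by (unfold eps'; apply Rdiv_lt_0_compat; lra).
  destruct (uniform_L (fun j L => Cmod (Cminus (cs (fun k => Cmult (a k) (pow_n (Cmult (RtoC r) (om' j)) k)) L)
                                          (f (Cmult (RtoC r) (om' j)))) < eps') N) as [L0 HL0].
  { intros j _. apply series_eps; auto. apply Hs. rewrite Cmod_z; lra. }
  set (L := (L0 + N)%nat).
  specialize (HL0 L ltac:(unfold L; lia)).
  set (Sg := cs (fun j => Cmult (cs (fun k => Cmult (a k) (pow_n (Cmult (RtoC r) (om' j)) k)) L) (K j)) N).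
  set (S := cs (fun j => Cmult (f (Cmult (RtoC r) (om' j))) (K j)) N).
  set (X := Cmod (a n) * r ^ n + 2 * s * r).
  set (T := cs (fun k => Cmult (Cmult (a (P + k)%nat) (RtoC (r ^ (P + k)))) (e (P + k)%nat)) (L - P)).
  assert (ESg : Sg = Cplus (Cmult (Cmult (RtoC (INR N)) v) (RtoC X)) T).
  { unfold Sg. rewrite sigma_id. replace L with (P + (L - P))%nat at 1 by (unfold L, P; lia).
    rewrite cs_split, head_sum. reflexivity. }
  assert (HT : Cmod T <= INR N * (1 + s) ^ 2 * (B * q ^ P / (1 - q))) by (apply tail_bound; auto; lra).
  assert (HS : Cmod S <= M * (INR N * (1 + s ^ 2))) by (apply S_bound; auto).
  assert (HD : Cmod (Cminus Sg S) <= INR N * (eps' * (1 + s) ^ 2)).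
  { unfold Sg, S. rewrite <- cs_minus.
    rewrite (cs_ext _ (fun j => Cmult (Cminus (cs (fun k => Cmult (a k) (pow_n (Cmult (RtoC r) (om' j)) k)) L)
                                          (f (Cmult (RtoC r) (om' j)))) (K j))) by (intros; ring).
    eapply Rle_trans. apply Cmod_cs. rewrite <- rs_const. apply rs_le. intros j Hj.
    rewrite Cmod_mult. apply Rmult_le_compat. apply Cmod_ge_0. apply Cmod_ge_0.
    apply Rlt_le, HL0; auto. apply K_le. }
  assert (HX0 : 0 <= X).
  { unfold X. assert (0 <= Cmod (a n) * r ^ n) by (apply Rmult_le_pos; [apply Cmod_ge_0|apply pow_le; lra]). nra. }
  assert (HH : INR N * X <= M * (INR N * (1 + s ^ 2)) + INR N * (eps' * (1 + s) ^ 2) + INR N * (1 + s) ^ 2 * (B * q ^ P / (1 - q))).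
  { replace (INR N * X) with (Cmod (Cmult (Cmult (RtoC (INR N)) v) (RtoC X))).
    2:{ rewrite !Cmod_mult, !Cmod_R, Hv1, !Rabs_right by lra. ring. }
    replace (Cmult (Cmult (RtoC (INR N)) v) (RtoC X)) with (Cplus (Cplus S (Cminus Sg S)) (Copp T)) by (rewrite ESg; ring).
    eapply Rle_trans. apply Cmod_triangle. rewrite Cmod_opp.
    eapply Rle_trans. apply Rplus_le_compat_r. apply Cmod_triangle. lra. }
  assert (Heq : eps' * (1 + s) ^ 2 = eps) by (unfold eps'; field; lra).
  rewrite Heq in HH.
  apply Rmult_le_reg_l with (INR N); auto. nra.
Qed.

End Key.


Lemma bernoulli x n : 0 <= x <= 1 -> 1 - INR n * (1 - x) <= x ^ n.
Proof.
  intros Hx. induction n. simpl. lra.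
  rewrite S_INR. simpl.
  destruct (Rle_dec 0 (1 - INR n * (1 - x))).
  - assert (x * (1 - INR n * (1 - x)) <= x * x ^ n) by (apply Rmult_le_compat_l; lra).
    pose proof (pos_INR n). assert (0 <= INR n * ((1 - x) * (1 - x))) by (apply Rmult_le_pos; nra). nra.
  - assert (0 <= x * x ^ n) by (apply Rmult_le_pos; [lra| apply pow_le; lra]). lra.
Qed.

Lemma coef_bound (f : C -> C) (a : nat -> C) (M : R) :
  (forall z, Cmod z < 1 -> is_series (fun k => Cmult (a k) (pow_n z k)) (f z)) ->
  a O = RtoC 0 -> a 1%nat = RtoC 1 -> 0 < M ->
  (forall z, Cmod z < 1 -> Cmod (f z) <= M) ->
  forall n, (2 <= n)%nat -> Cmod (a n) <= M - 1 / M.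
Proof.
  intros Hs Ha0 Ha1 HM Hf n Hn.
  assert (Hv : exists v, Cmod v = 1 /\ Cmult v (a n) = RtoC (Cmod (a n))).
  { destruct (Ceq_dec (a n) (RtoC 0)) as [Z|Z].
    - exists (RtoC 1). rewrite Cmod_1, Z, Cmod_0. split; auto. ring.
    - assert (Hp : 0 < Cmod (a n)) by (apply Cmod_gt_0; auto).
      exists (Cmult (Cconj (a n)) (RtoC (/ Cmod (a n)))). split.
      + rewrite Cmod_mult, Cmod_conj, Cmod_R, Rabs_right. field. lra.
        apply Rle_ge, Rlt_le, Rinv_0_lt_compat; auto.
      + transitivity (Cmult (Cmult (a n) (Cconj (a n))) (RtoC (/ Cmod (a n)))). ring.
        rewrite <- Cmod2_conj, <- RtoC_mult. f_equal. field. lra. }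
  destruct Hv as [v [Hv1 Hva]].
  set (s := / M).
  assert (Hs0 : 0 < s) by (apply Rinv_0_lt_compat; auto).
  set (D := M * (1 + s ^ 2)).
  assert (HR : forall r, 0 < r < 1 -> Cmod (a n) * r ^ n + 2 * s * r <= D).
  { intros r Hr.
    destruct (coef_bounded f a Hs ((1 + r) / 2) ltac:(lra)) as [B [HB0 HB]].
    set (q := r / ((1 + r) / 2)).
    assert (Hq : 0 <= q < 1).
    { unfold q. replace (r / ((1 + r) / 2)) with (2 * r * / (1 + r)) by (field; lra). split.
      apply Rmult_le_pos. lra. apply Rlt_le, Rinv_0_lt_compat; lra.
      apply Rmult_lt_reg_r with (1 + r). lra. rewrite Rmult_assoc, Rinv_l by lra. lra. }
    assert (Hab : forall k, Cmod (a k) * r ^ k <= B * q ^ k).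
    { intros k. replace (r ^ k) with (((1 + r) / 2) ^ k * q ^ k).
      2:{ rewrite <- Rpow_mult_distr. f_equal. unfold q. field. lra. }
      rewrite <- Rmult_assoc. apply Rmult_le_compat_r. apply pow_le; lra. apply HB. }
    apply approx_le. intros eps Heps.
    set (c := (1 + s) ^ 2 * B / (1 - q) + 1).
    assert (Hc : 0 < c).
    { unfold c. assert (0 <= (1 + s) ^ 2 * B / (1 - q)); [|lra].
      apply Rmult_le_pos. apply Rmult_le_pos; auto. apply pow_le; lra.
      apply Rlt_le, Rinv_0_lt_compat. lra. }
    destruct (pow_lt_1_zero q ltac:(rewrite Rabs_right; lra) (eps / c) ltac:(apply Rdiv_lt_0_compat; lra)) as [p0 Hp0].
    set (N := (p0 + 3 * n + 1)%nat).
    pose proof (key f a Hs Ha0 Ha1 M HM Hf n Hn v Hv1 Hva N ltac:(unfold N; lia) r B q ltac:(lra) HB0 Hq Hab) as K.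
    fold s in K. fold D in K.
    specialize (Hp0 (N - 2 * n)%nat ltac:(unfold N; lia)).
    rewrite Rabs_right in Hp0 by (apply Rle_ge, pow_le; lra).
    assert ((1 + s) ^ 2 * (B * q ^ (N - 2 * n) / (1 - q)) <= eps).
    { replace ((1 + s) ^ 2 * (B * q ^ (N - 2 * n) / (1 - q))) with (((1 + s) ^ 2 * B / (1 - q)) * q ^ (N - 2 * n)) by (field; lra).
      apply Rle_trans with (c * q ^ (N - 2 * n)).
      apply Rmult_le_compat_r. apply pow_le; lra. unfold c; lra.
      apply Rlt_le. apply Rmult_lt_reg_r with (/ c). apply Rinv_0_lt_compat; auto.
      replace (c * q ^ (N - 2 * n) * / c) with (q ^ (N - 2 * n)) by (field; lra). exact Hp0. }
    lra. }
  assert (HX : Cmod (a n) + 2 * s <= D).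
  { apply approx_le. intros eps Heps.
    pose proof (Cmod_ge_0 (a n)) as Ha.
    set (c := INR n * Cmod (a n) + 2 * s + 1).
    assert (Hc : 0 < c) by (unfold c; pose proof (pos_INR n); nra).
    set (del := Rmin (1/2) (eps / c)).
    assert (Hd0 : 0 < del) by (unfold del; apply Rmin_pos; [lra | apply Rdiv_lt_0_compat; lra]).
    assert (Hd1 : del <= 1/2) by apply Rmin_l.
    assert (Hd2 : del <= eps / c) by apply Rmin_r.
    specialize (HR (1 - del) ltac:(lra)).
    pose proof (bernoulli (1 - del) n ltac:(lra)) as Hb.
    assert (Cmod (a n) * (1 - INR n * del) <= Cmod (a n) * (1 - del) ^ n).
    { apply Rmult_le_compat_l; auto. replace (INR n * del) with (INR n * (1 - (1 - del))) by ring. auto. }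
    assert (del * c <= eps).
    { apply Rle_trans with (eps / c * c). apply Rmult_le_compat_r; lra. right; field; lra. }
    unfold c in *. pose proof (pos_INR n). nra. }
  unfold D, s in HX. 
  assert (E : M * (1 + (/ M) ^ 2) - 2 * / M = M - 1 / M) by (field; lra).
  lra.
Qed.


Lemma rs_shift1 u L : rs u (S L) = u O + rs (fun k => u (S k)) L.
Proof. induction L; simpl. ring. simpl in IHL. rewrite IHL. ring. Qed.

Lemma pow_diff (z1 z2 : C) r j : Cmod z1 <= r -> Cmod z2 <= r ->
  Cmod (Cminus (Cpow z1 (S j)) (Cpow z2 (S j))) <= INR (S j) * r ^ j * Cmod (Cminus z1 z2).
Proof.
  intros H1 H2. pose proof (Cmod_ge_0 z1). pose proof (Cmod_ge_0 (Cminus z1 z2)).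
  induction j.
  - simpl. replace (Cminus (Cmult z1 (RtoC 1)) (Cmult z2 (RtoC 1))) with (Cminus z1 z2) by ring. lra.
  - replace (Cminus (Cpow z1 (S (S j))) (Cpow z2 (S (S j)))) with
      (Cplus (Cmult z1 (Cminus (Cpow z1 (S j)) (Cpow z2 (S j)))) (Cmult (Cpow z2 (S j)) (Cminus z1 z2))) by (simpl; ring).
    eapply Rle_trans. apply Cmod_triangle. rewrite !Cmod_mult, Cmod_pow.
    assert (Cmod z2 ^ S j <= r ^ S j) by (apply pow_incr; split; [apply Cmod_ge_0|auto]).
    assert (0 <= Cmod (Cminus (Cpow z1 (S j)) (Cpow z2 (S j)))) by apply Cmod_ge_0.
    assert (0 <= r ^ j) by (apply pow_le; lra).
    assert (Cmod z1 * Cmod (Cminus (Cpow z1 (S j)) (Cpow z2 (S j))) <= r * (INR (S j) * r ^ j * Cmod (Cminus z1 z2))).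
    { apply Rmult_le_compat; auto. }
    assert (Cmod z2 ^ S j * Cmod (Cminus z1 z2) <= r ^ S j * Cmod (Cminus z1 z2)) by (apply Rmult_le_compat_r; auto).
    replace (INR (S (S j)) * r ^ S j * Cmod (Cminus z1 z2)) with
      (r * (INR (S j) * r ^ j * Cmod (Cminus z1 z2)) + r ^ S j * Cmod (Cminus z1 z2)).
    lra. rewrite (S_INR (S j)). simpl. ring.
Qed.

Section EstB.
Variable f : C -> C.
Variable a : nat -> C.
Hypothesis Hs : forall z, Cmod z < 1 -> is_series (fun k => Cmult (a k) (pow_n z k)) (f z).
Hypothesis Ha0 : a O = RtoC 0.
Hypothesis Ha1 : a 1%nat = RtoC 1.
Variable A : R.
Hypothesis HA0 : 0 <= A.
Hypothesis HA : forall k, (2 <= k)%nat -> Cmod (a k) <= A.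

Lemma partial_shift z L : cs (fun k => Cmult (a k) (pow_n z k)) (S (S L)) =
   Cplus z (cs (fun k => Cmult (a (S (S k))) (Cpow z (S (S k)))) L).
Proof.
  rewrite cs_shift2, Ha0, Ha1. simpl pow_n.
  change (mult z one) with (Cmult z (RtoC 1)). change (@one C_Ring) with (RtoC 1).
  rewrite (cs_ext (fun k => Cmult (a (S (S k))) (pow_n z (S (S k)))) (fun k => Cmult (a (S (S k))) (Cpow z (S (S k))))).
  ring. intros k _. rewrite pow_n_Cpow. reflexivity.
Qed.

Lemma estB1 z r : Cmod z <= r -> r < 1 -> Cmod (Cminus (f z) z) <= A * (r ^ 2 / (1 - r)).
Proof.
  intros Hz Hr. pose proof (Cmod_ge_0 z).
  apply ps_bound with (a := a); auto. lra.
  intros L. rewrite partial_shift.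
  replace (Cminus (Cplus z (cs (fun k => Cmult (a (S (S k))) (Cpow z (S (S k)))) L)) z)
    with (cs (fun k => Cmult (a (S (S k))) (Cpow z (S (S k)))) L) by ring.
  eapply Rle_trans. apply Cmod_cs.
  apply Rle_trans with (rs (fun k => (A * r ^ 2) * r ^ k) L).
  - apply rs_le. intros k _. rewrite Cmod_mult, Cmod_pow.
    replace (A * r ^ 2 * r ^ k) with (A * r ^ S (S k)) by (simpl; ring).
    apply Rmult_le_compat. apply Cmod_ge_0. apply pow_le, Cmod_ge_0. apply HA; lia.
    apply pow_incr; lra.
  - rewrite rs_mult_l. assert (rs (fun k => r ^ k) L <= 1 / (1 - r)) by (apply geom_rs; lra).
    assert (0 <= A * r ^ 2) by (apply Rmult_le_pos; auto; apply pow_le; lra).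
    replace (A * (r ^ 2 / (1 - r))) with (A * r ^ 2 * (1 / (1 - r))) by (field; lra).
    apply Rmult_le_compat_l; auto.
Qed.

Lemma estB2 z1 z2 r : Cmod z1 <= r -> Cmod z2 <= r -> r < 1 ->
  Cmod (Cminus (Cminus (f z1) (f z2)) (Cminus z1 z2)) <= A * Cmod (Cminus z1 z2) * ((2 * r - r ^ 2) / (1 - r) ^ 2).
Proof.
  intros H1 H2 Hr. pose proof (Cmod_ge_0 z1). pose proof (Cmod_ge_0 (Cminus z1 z2)).
  apply ps_bound2 with (a := a); auto; try lra.
  intros L. rewrite !partial_shift.
  replace (Cminus (Cminus (Cplus z1 (cs (fun k => Cmult (a (S (S k))) (Cpow z1 (S (S k)))) L))
                          (Cplus z2 (cs (fun k => Cmult (a (S (S k))) (Cpow z2 (S (S k)))) L))) (Cminus z1 z2))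
    with (cs (fun k => Cmult (a (S (S k))) (Cminus (Cpow z1 (S (S k))) (Cpow z2 (S (S k))))) L).
  2:{ rewrite (cs_ext _ (fun k => Cminus (Cmult (a (S (S k))) (Cpow z1 (S (S k)))) (Cmult (a (S (S k))) (Cpow z2 (S (S k)))))) by (intros; ring).
      rewrite cs_minus. ring. }
  eapply Rle_trans. apply Cmod_cs.
  apply Rle_trans with (rs (fun k => (A * Cmod (Cminus z1 z2)) * (INR (S (S k)) * r ^ (S k))) L).
  - apply rs_le. intros k _. rewrite Cmod_mult.
    pose proof (pow_diff z1 z2 r (S k) H1 H2).
    replace (A * Cmod (Cminus z1 z2) * (INR (S (S k)) * r ^ S k)) with (A * (INR (S (S k)) * r ^ S k * Cmod (Cminus z1 z2))) by ring.
    apply Rmult_le_compat. apply Cmod_ge_0. apply Cmod_ge_0. apply HA; lia. auto.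
  - rewrite rs_mult_l.
    assert (0 <= A * Cmod (Cminus z1 z2)) by (apply Rmult_le_pos; auto).
    apply Rmult_le_compat_l; auto.
    pose proof (deriv_rs r (S L) ltac:(lra)) as D. rewrite rs_shift1 in D. replace (INR 1 * r ^ 0) with 1 in D by (simpl; ring).
    replace ((2 * r - r ^ 2) / (1 - r) ^ 2) with (1 / (1 - r) ^ 2 - 1) by (field; lra).
    lra.
Qed.

End EstB.


Lemma im_le_Cmod c : Rabs (Im c) <= Cmod c.
Proof.
  pose proof (re_le_Cmod (Cmult Ci c)) as H. rewrite Cmod_mult, Cmod_Ci, Rmult_1_l in H.
  replace (Re (Cmult Ci c)) with (- Im c) in H. rewrite Rabs_Ropp in H. auto.
  destruct c as [x y]. unfold Ci, Cmult, Re, Im; simpl. ring.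
Qed.

Lemma Cmod_le_sum c : Cmod c <= 2 * (Rabs (fst c) + Rabs (snd c)).
Proof.
  eapply Rle_trans. apply Cmod_2Rmax.
  assert (sqrt 2 < 2). { rewrite <- (sqrt_square 2) at 2 by lra. apply sqrt_lt_1; lra. }
  assert (0 <= sqrt 2) by apply sqrt_pos.
  assert (Rmax (Rabs (fst c)) (Rabs (snd c)) <= Rabs (fst c) + Rabs (snd c)).
  { pose proof (Rabs_pos (fst c)). pose proof (Rabs_pos (snd c)). apply Rmax_lub; lra. }
  assert (0 <= Rmax (Rabs (fst c)) (Rabs (snd c))) by (eapply Rle_trans; [apply Rabs_pos|apply Rmax_l]).
  nra.
Qed.

Fixpoint iterT (T : C -> C) (n : nat) : C := match n with O => RtoC 0 | S n => T (iterT T n) end.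

Lemma fst_minus (a b : C) : fst (Cminus a b) = fst a - fst b.
Proof. destruct a, b. simpl. ring. Qed.
Lemma snd_minus (a b : C) : snd (Cminus a b) = snd a - snd b.
Proof. destruct a, b. simpl. ring. Qed.

Section Main.
Variables G H : C -> C.
Variables A1 A2 : R.
Hypothesis HA1 : 0 <= A1.
Hypothesis HA2 : 0 <= A2.
Hypothesis eG1 : forall z r, Cmod z <= r -> r < 1 -> Cmod (Cminus (G z) z) <= A1 * (r ^ 2 / (1 - r)).
Hypothesis eH1 : forall z r, Cmod z <= r -> r < 1 -> Cmod (Cminus (H z) z) <= A2 * (r ^ 2 / (1 - r)).
Hypothesis eG2 : forall z1 z2 r, Cmod z1 <= r -> Cmod z2 <= r -> r < 1 ->
  Cmod (Cminus (Cminus (G z1) (G z2)) (Cminus z1 z2)) <= A1 * Cmod (Cminus z1 z2) * ((2 * r - r ^ 2) / (1 - r) ^ 2).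
Hypothesis eH2 : forall z1 z2 r, Cmod z1 <= r -> Cmod z2 <= r -> r < 1 ->
  Cmod (Cminus (Cminus (H z1) (H z2)) (Cminus z1 z2)) <= A2 * Cmod (Cminus z1 z2) * ((2 * r - r ^ 2) / (1 - r) ^ 2).

Definition eqr r := 1 - A2 * ((2 * r - r ^ 2) / (1 - r) ^ 2) - A1 * ((3 - 2 * r) * r ^ 2 / (1 - r) ^ 2) - 2 * r.
Definition sig r := r - r ^ 2 - A2 * (r ^ 2 / (1 - r)) - A1 * (r ^ 3 / (1 - r)).
Definition E z := Cminus (Cplus (Cmult (Cconj z) (G z)) (H z)) z.

Lemma Lip z1 z2 r : Cmod z1 <= r -> Cmod z2 <= r -> 0 <= r < 1 ->
  Cmod (Cminus (E z1) (E z2)) <= (1 - eqr r) * Cmod (Cminus z1 z2).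
Proof.
  intros H1 H2 Hr.
  set (d := Cmod (Cminus z1 z2)). assert (Hd : 0 <= d) by apply Cmod_ge_0.
  assert (E1 : Cminus (E z1) (E z2) = Cplus (Cplus (Cmult (Cconj (Cminus z1 z2)) (G z1))
             (Cmult (Cconj z2) (Cminus (G z1) (G z2)))) (Cminus (Cminus (H z1) (H z2)) (Cminus z1 z2))).
  { unfold E. rewrite Cminus_conj. ring. }
  rewrite E1.
  assert (HG1 : Cmod (G z1) <= r + A1 * (r ^ 2 / (1 - r))).
  { replace (G z1) with (Cplus z1 (Cminus (G z1) z1)) by ring. eapply Rle_trans. apply Cmod_triangle.
    pose proof (eG1 z1 r H1 ltac:(lra)). lra. }
  assert (HG2 : Cmod (Cminus (G z1) (G z2)) <= d + A1 * d * ((2 * r - r ^ 2) / (1 - r) ^ 2)).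
  { replace (Cminus (G z1) (G z2)) with (Cplus (Cminus z1 z2) (Cminus (Cminus (G z1) (G z2)) (Cminus z1 z2))) by ring.
    eapply Rle_trans. apply Cmod_triangle. pose proof (eG2 z1 z2 r H1 H2 ltac:(lra)). fold d in H0 |- *. lra. }
  pose proof (eH2 z1 z2 r H1 H2 ltac:(lra)) as HH2. fold d in HH2.
  eapply Rle_trans. apply Cmod_triangle. eapply Rle_trans. apply Rplus_le_compat_r. apply Cmod_triangle.
  rewrite !Cmod_mult, !Cmod_conj. fold d.
  assert (T1 : d * Cmod (G z1) <= d * (r + A1 * (r ^ 2 / (1 - r)))) by (apply Rmult_le_compat_l; auto).
  assert (T2 : Cmod z2 * Cmod (Cminus (G z1) (G z2)) <= r * (d + A1 * d * ((2 * r - r ^ 2) / (1 - r) ^ 2))).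
  { apply Rmult_le_compat; auto. apply Cmod_ge_0. apply Cmod_ge_0. }
  assert (Eq : (1 - eqr r) * d = d * (r + A1 * (r ^ 2 / (1 - r))) + r * (d + A1 * d * ((2 * r - r ^ 2) / (1 - r) ^ 2))
                                 + A2 * d * ((2 * r - r ^ 2) / (1 - r) ^ 2)).
  { unfold eqr. field. lra. }
  lra.
Qed.

Lemma Ebound z r : Cmod z <= r -> 0 <= r < 1 -> Cmod (E z) <= r - sig r.
Proof.
  intros Hz Hr.
  assert (E1 : E z = Cplus (Cmult (Cconj z) (G z)) (Cminus (H z) z)) by (unfold E; ring).
  rewrite E1. eapply Rle_trans. apply Cmod_triangle. rewrite Cmod_mult, Cmod_conj.
  assert (HG1 : Cmod (G z) <= r + A1 * (r ^ 2 / (1 - r))).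
  { replace (G z) with (Cplus z (Cminus (G z) z)) by ring. eapply Rle_trans. apply Cmod_triangle.
    pose proof (eG1 z r Hz ltac:(lra)). lra. }
  pose proof (eH1 z r Hz ltac:(lra)).
  assert (Cmod z * Cmod (G z) <= r * (r + A1 * (r ^ 2 / (1 - r)))).
  { apply Rmult_le_compat; auto; apply Cmod_ge_0. }
  assert (Eq : r - sig r = r * (r + A1 * (r ^ 2 / (1 - r))) + A2 * (r ^ 2 / (1 - r))) by (unfold sig; field; lra).
  lra.
Qed.

Lemma eqr_mono r rho : 0 <= r < rho -> rho < 1 -> eqr rho + 2 * (rho - r) <= eqr r.
Proof.
  intros Hr Hrho. unfold eqr.
  replace ((2 * r - r ^ 2) / (1 - r) ^ 2) with (/ (1 - r) ^ 2 - 1) by (field; lra).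
  replace ((2 * rho - rho ^ 2) / (1 - rho) ^ 2) with (/ (1 - rho) ^ 2 - 1) by (field; lra).
  assert (G1 : / (1 - r) ^ 2 <= / (1 - rho) ^ 2).
  { apply Rinv_le_contravar. apply pow_lt; lra. apply pow_incr; lra. }
  assert (Hh : (3 - 2 * r) * r ^ 2 <= (3 - 2 * rho) * rho ^ 2).
  { simpl. assert (0 <= (rho - r) * (3 * (rho + r) - 2 * (rho * rho + rho * r + r * r))).
    { apply Rmult_le_pos. lra. nra. } nra. }
  assert (G2 : (3 - 2 * r) * r ^ 2 / (1 - r) ^ 2 <= (3 - 2 * rho) * rho ^ 2 / (1 - rho) ^ 2).
  { unfold Rdiv. apply Rle_trans with ((3 - 2 * rho) * rho ^ 2 * / (1 - r) ^ 2).
    apply Rmult_le_compat_r; auto. apply Rlt_le, Rinv_0_lt_compat, pow_lt; lra.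
    apply Rmult_le_compat_l; auto. simpl. nra. }
  assert (A2 * / (1 - r) ^ 2 <= A2 * / (1 - rho) ^ 2) by (apply Rmult_le_compat_l; auto).
  assert (A1 * ((3 - 2 * r) * r ^ 2 / (1 - r) ^ 2) <= A1 * ((3 - 2 * rho) * rho ^ 2 / (1 - rho) ^ 2)) by (apply Rmult_le_compat_l; auto).
  lra.
Qed.

Lemma sig_mono r rho : 0 <= r <= rho -> rho < 1 -> sig rho - sig r <= rho - r.
Proof.
  intros Hr Hrho. unfold sig.
  assert (I : / (1 - r) <= / (1 - rho)) by (apply Rinv_le_contravar; lra).
  assert (P2 : r ^ 2 <= rho ^ 2) by (apply pow_incr; lra).
  assert (P3 : r ^ 3 <= rho ^ 3) by (apply pow_incr; lra).
  assert (Q2 : r ^ 2 / (1 - r) <= rho ^ 2 / (1 - rho)).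
  { unfold Rdiv. apply Rmult_le_compat; auto. apply pow_le; lra. apply Rlt_le, Rinv_0_lt_compat; lra. }
  assert (Q3 : r ^ 3 / (1 - r) <= rho ^ 3 / (1 - rho)).
  { unfold Rdiv. apply Rmult_le_compat; auto. apply pow_le; lra. apply Rlt_le, Rinv_0_lt_compat; lra. }
  assert (A2 * (r ^ 2 / (1 - r)) <= A2 * (rho ^ 2 / (1 - rho))) by (apply Rmult_le_compat_l; auto).
  assert (A1 * (r ^ 3 / (1 - r)) <= A1 * (rho ^ 3 / (1 - rho))) by (apply Rmult_le_compat_l; auto).
  lra.
Qed.

Lemma sig_le r : 0 <= r < 1 -> sig r <= r.
Proof.
  intros Hr. unfold sig.
  assert (0 <= r ^ 2 / (1 - r)) by (apply Rmult_le_pos; [apply pow_le; lra| apply Rlt_le, Rinv_0_lt_compat; lra]).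
  assert (0 <= r ^ 3 / (1 - r)) by (apply Rmult_le_pos; [apply pow_le; lra| apply Rlt_le, Rinv_0_lt_compat; lra]).
  assert (0 <= r ^ 2) by (apply pow_le; lra).
  assert (0 <= A2 * (r ^ 2 / (1 - r))) by (apply Rmult_le_pos; auto).
  assert (0 <= A1 * (r ^ 3 / (1 - r))) by (apply Rmult_le_pos; auto).
  lra.
Qed.

Lemma eqr_le r : 0 <= r < 1 -> 1 - eqr r >= 0.
Proof.
  intros Hr. unfold eqr.
  assert (0 <= (2 * r - r ^ 2) / (1 - r) ^ 2).
  { apply Rmult_le_pos. simpl; nra. apply Rlt_le, Rinv_0_lt_compat, pow_lt; lra. }
  assert (0 <= (3 - 2 * r) * r ^ 2 / (1 - r) ^ 2).
  { apply Rmult_le_pos. apply Rmult_le_pos. lra. apply pow_le; lra. apply Rlt_le, Rinv_0_lt_compat, pow_lt; lra. }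
  assert (0 <= A2 * ((2 * r - r ^ 2) / (1 - r) ^ 2)) by (apply Rmult_le_pos; auto).
  assert (0 <= A1 * ((3 - 2 * r) * r ^ 2 / (1 - r) ^ 2)) by (apply Rmult_le_pos; auto).
  lra.
Qed.

Definition Fm z := Cplus (Cmult (Cconj z) (G z)) (H z).

Lemma Fm_E z : Fm z = Cplus z (E z).
Proof. unfold Fm, E. ring. Qed.

Lemma univalent rho : 0 < rho < 1 -> eqr rho = 0 -> forall z w, Cmod z < rho -> Cmod w < rho -> Fm z = Fm w -> z = w.
Proof.
  intros Hrho Heq z w Hz Hw HF.
  set (r := Rmax (Cmod z) (Cmod w)).
  assert (Hr0 : 0 <= r) by (eapply Rle_trans; [apply Cmod_ge_0|apply Rmax_l]).
  assert (Hr1 : r < rho) by (apply Rmax_lub_lt; auto).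
  pose proof (Lip z w r (Rmax_l _ _) (Rmax_r _ _) ltac:(lra)) as HL.
  pose proof (eqr_mono r rho ltac:(lra) ltac:(lra)) as Hm.
  rewrite !Fm_E in HF.
  assert (Cminus (E z) (E w) = Copp (Cminus z w)) as E1.
  { transitivity (Cminus (Cminus (Cplus z (E z)) z) (Cminus (Cplus w (E w)) w)). ring. rewrite HF. ring. }
  rewrite E1, Cmod_opp in HL.
  assert (Cmod (Cminus z w) = 0).
  { pose proof (Cmod_ge_0 (Cminus z w)). nra. }
  apply Ceq_minus. apply Cmod_eq_0. auto.
Qed.

Lemma cover rho : 0 < rho < 1 -> eqr rho = 0 -> forall w, Cmod w < sig rho -> exists z, Cmod z < rho /\ Fm z = w.
Proof.
  intros Hrho Heq w Hw.
  pose proof (Cmod_ge_0 w) as Hw0.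
  pose proof (sig_le rho ltac:(lra)) as Hsl.
  set (r := rho - (sig rho - Cmod w) / 2).
  assert (Hr : rho / 2 <= r < rho) by (unfold r; lra).
  pose proof (sig_mono r rho ltac:(lra) ltac:(lra)) as Hsm.
  assert (Hsr : Cmod w <= sig r) by (unfold r in *; lra).
  set (k := 1 - eqr r).
  assert (Hk0 : 0 <= k) by (pose proof (eqr_le r ltac:(lra)); unfold k; lra).
  assert (Hk1 : k < 1) by (pose proof (eqr_mono r rho ltac:(lra) ltac:(lra)); unfold k; lra).
  set (T := fun z => Cminus w (E z)).
  assert (Tin : forall z, Cmod z <= r -> Cmod (T z) <= r).
  { intros z Hz. unfold T. eapply Rle_trans. unfold Cminus. apply Cmod_triangle. rewrite Cmod_opp.
    pose proof (Ebound z r Hz ltac:(lra)). lra. }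
  assert (Tlip : forall z1 z2, Cmod z1 <= r -> Cmod z2 <= r -> Cmod (Cminus (T z1) (T z2)) <= k * Cmod (Cminus z1 z2)).
  { intros z1 z2 H1 H2. unfold T. replace (Cminus (Cminus w (E z1)) (Cminus w (E z2))) with (Copp (Cminus (E z1) (E z2))) by ring.
    rewrite Cmod_opp. apply Lip; auto. lra. }
  set (it := iterT T).
  assert (itr : forall n, Cmod (it n) <= r).
  { induction n. change (it 0%nat) with (RtoC 0). rewrite Cmod_0. lra. change (it (S n)) with (T (it n)). apply Tin. auto. }
  assert (step : forall n, Cmod (Cminus (it (S n)) (it n)) <= k ^ n * r).
  { induction n.
    - change (it 1%nat) with (T (RtoC 0)). change (it 0%nat) with (RtoC 0).
      replace (Cminus (T (RtoC 0)) (RtoC 0)) with (T (RtoC 0)) by ring. simpl pow. rewrite Rmult_1_l. apply Tin. rewrite Cmod_0; lra.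
    - change (it (S (S n))) with (T (it (S n))). change (it (S n)) with (T (it n)) at 2.
      eapply Rle_trans. apply Tlip; auto. simpl. 
      change (T (it n)) with (it (S n)). rewrite Rmult_assoc. apply Rmult_le_compat_l; auto. }
  assert (cauchy : forall n p, Cmod (Cminus (it (n + p)%nat) (it n)) <= r * k ^ n / (1 - k)).
  { intros n p. apply Rle_trans with (r * k ^ n * (1 - k ^ p) / (1 - k)).
    - induction p.
      + rewrite Nat.add_0_r. replace (Cminus (it n) (it n)) with (RtoC 0) by ring. rewrite Cmod_0. simpl. right; field. lra.
      + replace (Cminus (it (n + S p)%nat) (it n)) with (Cplus (Cminus (it (S (n + p))) (it (n + p)%nat)) (Cminus (it (n + p)%nat) (it n)))
          by (rewrite Nat.add_succ_r; ring).
        eapply Rle_trans. apply Cmod_triangle. pose proof (step (n + p)%nat). rewrite pow_add in H0.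
        replace (r * k ^ n * (1 - k ^ S p) / (1 - k)) with (k ^ n * k ^ p * r + r * k ^ n * (1 - k ^ p) / (1 - k)) by (simpl; field; lra).
        lra.
    - unfold Rdiv. apply Rmult_le_compat_r. apply Rlt_le, Rinv_0_lt_compat; lra.
      assert (0 <= k ^ p) by (apply pow_le; auto). assert (0 <= r * k ^ n) by (apply Rmult_le_pos; [lra|apply pow_le; auto]). nra. }
  assert (small : forall eps, 0 < eps -> exists N, forall n m, (N <= n)%nat -> (N <= m)%nat -> Cmod (Cminus (it m) (it n)) < eps).
  { intros eps He.
    destruct (pow_lt_1_zero k ltac:(rewrite Rabs_right; lra) (eps * (1 - k) / (r + 1)) ltac:(apply Rdiv_lt_0_compat; nra)) as [N HN].
    exists N. intros n m Hn Hm.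
    assert (Hg : forall n0 m0, (N <= n0)%nat -> (n0 <= m0)%nat -> Cmod (Cminus (it m0) (it n0)) < eps).
    { intros n0 m0 H0 H1. replace m0 with (n0 + (m0 - n0))%nat by lia.
      eapply Rle_lt_trans. apply cauchy. specialize (HN n0 H0). rewrite Rabs_right in HN by (apply Rle_ge, pow_le; auto).
      apply Rmult_lt_reg_r with (1 - k). lra.
      replace (r * k ^ n0 / (1 - k) * (1 - k)) with (r * k ^ n0) by (field; lra).
      apply Rle_lt_trans with (r * (eps * (1 - k) / (r + 1))).
      apply Rmult_le_compat_l; lra.
      replace (r * (eps * (1 - k) / (r + 1))) with (eps * (1 - k) * (r / (r + 1))) by (field; lra).
      assert (r / (r + 1) < 1) by (apply Rmult_lt_reg_r with (r + 1); [lra|]; unfold Rdiv; rewrite Rmult_assoc, Rinv_l by lra; lra).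
      assert (0 < eps * (1 - k)) by nra. nra. }
    destruct (Nat.le_ge_cases n m).
    - apply Hg; auto.
    - replace (Cminus (it m) (it n)) with (Copp (Cminus (it n) (it m))) by ring. rewrite Cmod_opp. apply Hg; auto. }
  assert (Cre : Cauchy_crit (fun n => fst (it n))).
  { intros eps He. destruct (small eps He) as [N HN]. exists N. intros n m Hn Hm. unfold R_dist.
    rewrite <- fst_minus. eapply Rle_lt_trans. apply (re_le_Cmod (Cminus (it n) (it m))). apply HN; auto. }
  assert (Cim : Cauchy_crit (fun n => snd (it n))).
  { intros eps He. destruct (small eps He) as [N HN]. exists N. intros n m Hn Hm. unfold R_dist.
    rewrite <- snd_minus. eapply Rle_lt_trans. apply (im_le_Cmod (Cminus (it n) (it m))). apply HN; auto. }
  destruct (Rcomplete.R_complete _ Cre) as [x Hx].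
  destruct (Rcomplete.R_complete _ Cim) as [y Hy].
  set (zs := (x, y) : C).
  assert (conv : forall eps, 0 < eps -> exists N, forall n, (N <= n)%nat -> Cmod (Cminus (it n) zs) < eps).
  { intros eps He. destruct (Hx (eps / 8) ltac:(lra)) as [N1 H1]. destruct (Hy (eps / 8) ltac:(lra)) as [N2 H2].
    exists (N1 + N2)%nat. intros n Hn. eapply Rle_lt_trans. apply Cmod_le_sum.
    rewrite fst_minus, snd_minus. specialize (H1 n ltac:(lia)). specialize (H2 n ltac:(lia)).
    unfold R_dist in H1, H2. unfold zs. simpl fst. simpl snd. lra. }
  assert (Hzs : Cmod zs <= r).
  { apply approx_le. intros eps He. destruct (conv eps He) as [N HN]. specialize (HN N (le_n N)).
    replace zs with (Cplus (it N) (Copp (Cminus (it N) zs))) by ring.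
    eapply Rle_trans. apply Cmod_triangle. rewrite Cmod_opp. pose proof (itr N). lra. }
  assert (Hfix : T zs = zs).
  { apply Cmod_small_eq. intros eps He. destruct (conv (eps / 2) ltac:(lra)) as [N HN].
    specialize (HN N (le_n N)) as HN1. specialize (HN (S N) ltac:(lia)) as HN2.
    replace (Cminus (T zs) zs) with (Cplus (Cminus (T zs) (T (it N))) (Cminus (it (S N)) zs)) by (change (it (S N)) with (T (it N)); ring).
    eapply Rle_lt_trans. apply Cmod_triangle.
    pose proof (Tlip zs (it N) Hzs (itr N)).
    replace (Cminus zs (it N)) with (Copp (Cminus (it N) zs)) in H0 by ring. rewrite Cmod_opp in H0.
    pose proof (Cmod_ge_0 (Cminus (it N) zs)).
    assert (k * Cmod (Cminus (it N) zs) <= Cmod (Cminus (it N) zs)) by nra.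
    lra. }
  exists zs. split. lra.
  rewrite Fm_E. unfold T in Hfix. rewrite <- Hfix at 1. ring.
Qed.

End Main.


Theorem theorem2p3 (M1 M2 : R) (G H : C -> C) (rho3 : R) :
  0 < M1 -> 0 < M2 ->
  analytic_in_D G -> analytic_in_D H ->
  G (RtoC 0) = RtoC 0 -> H (RtoC 0) = RtoC 0 ->
  is_derive (K := C_AbsRing) (V := C_NormedModule) G (RtoC 0) (RtoC 1) ->
  is_derive (K := C_AbsRing) (V := C_NormedModule) H (RtoC 0) (RtoC 1) ->
  (forall z : C, in_disk 1 z -> Cmod (G z) <= M1) ->
  (forall z : C, in_disk 1 z -> Cmod (H z) <= M2) ->
  (* rho3 is the unique root in (0,1) of the equation *)
  0 < rho3 < 1 -> eq_rho3 M1 M2 rho3 = 0 ->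
  (forall r : R, 0 < r < 1 -> eq_rho3 M1 M2 r = 0 -> r = rho3) ->
  let F := fun z : C => Cplus (Cmult (Cconj z) (G z)) (H z) in
  let sigma3 := sigma3_of M1 M2 rho3 in
  univalent_on_disk rho3 F /\
  (forall w : C, in_disk sigma3 w -> exists z : C, in_disk rho3 z /\ F z = w).
Proof.
  intros HM1 HM2 [aG HsG] [aH HsH] HG0 HH0 HdG HdH HbG HbH Hrho Heq _ F sigma3.
  assert (HsG' : forall z, Cmod z < 1 -> is_series (fun k => Cmult (aG k) (pow_n z k)) (G z)) by exact HsG.
  assert (HsH' : forall z, Cmod z < 1 -> is_series (fun k => Cmult (aH k) (pow_n z k)) (H z)) by exact HsH.
  assert (HbG' : forall z, Cmod z < 1 -> Cmod (G z) <= M1) by exact HbG.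
  assert (HbH' : forall z, Cmod z < 1 -> Cmod (H z) <= M2) by exact HbH.
  assert (aG0 : aG O = RtoC 0) by (rewrite (coef0 G aG HsG'); auto).
  assert (aH0 : aH O = RtoC 0) by (rewrite (coef0 H aH HsH'); auto).
  assert (aG1 : aG 1%nat = RtoC 1) by (apply (coef1 G aG); auto).
  assert (aH1 : aH 1%nat = RtoC 1) by (apply (coef1 H aH); auto).
  set (A1 := M1 - 1 / M1). set (A2 := M2 - 1 / M2).
  assert (HkG : forall k, (2 <= k)%nat -> Cmod (aG k) <= A1) by (apply (coef_bound G aG M1); auto).
  assert (HkH : forall k, (2 <= k)%nat -> Cmod (aH k) <= A2) by (apply (coef_bound H aH M2); auto).
  assert (HA1 : 0 <= A1) by (eapply Rle_trans; [apply Cmod_ge_0| apply (HkG 2%nat); lia]).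
  assert (HA2 : 0 <= A2) by (eapply Rle_trans; [apply Cmod_ge_0| apply (HkH 2%nat); lia]).
  pose proof (estB1 G aG HsG' aG0 aG1 A1 HA1 HkG) as eG1.
  pose proof (estB1 H aH HsH' aH0 aH1 A2 HA2 HkH) as eH1.
  pose proof (estB2 G aG HsG' aG0 aG1 A1 HA1 HkG) as eG2.
  pose proof (estB2 H aH HsH' aH0 aH1 A2 HA2 HkH) as eH2.
  assert (Heq' : eqr A1 A2 rho3 = 0) by exact Heq.
  split.
  - intros z w Hz Hw HF. eapply (univalent G H A1 A2); eauto.
  - intros w Hw. destruct (cover G H A1 A2 HA1 HA2 eG1 eH1 eG2 eH2 rho3 Hrho Heq' w Hw) as [z [Hz1 Hz2]].
    exists z. split; auto.
Qed.
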